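(* Let $n\ge1$ and $\beta\in\mathbb C$, $\beta\ne0$. Let $\tilde t^{(r)}_{ij}$ ($1\le i,j\le n$, $r\ge1$) be elements of a unital associative $\mathbb C$-algebra, put $\tilde t^{(0)}_{ij}=\delta_{ij}$ and $\tilde T_{ij}(u)=\sum_{r\ge0}\tilde t^{(r)}_{ij}u^{-r}$. Then the relations $$\left(u+\frac\beta u-v-\frac\beta v\right)[\tilde T_{ij}(u),\tilde T_{kl}(v)]=\tilde T_{kj}(u)\tilde T_{il}(v)-\tilde T_{kj}(v)\tilde T_{il}(u)\qquad(1\le i,j,k,l\le n)$$ hold if and only if for all $r,s\ge1$ and all $i,j,k,l$ $$[\tilde t^{(r)}_{ij},\tilde t^{(s)}_{kl}]=\sum_{\substack{p,m\ge0\\ m-s\le p\le r-m-1}}\beta^m\left(\tilde t^{(r-p-m-1)}_{kj}\tilde t^{(p+s-m)}_{il}-\tilde t^{(p+s-m)}_{kj}\tilde t^{(r-p-m-1)}_{il}\right).$$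
   Context: The first system is the defining relation system (in generating-series form) of the algebra $OY_\beta(\mathfrak{gl}_n)$ attached to Dickson polynomials; it is equivalent to the matrix relation $R^\beta(u,v)\tilde T_1(u)\tilde T_2(v)=\tilde T_2(v)\tilde T_1(u)R^\beta(u,v)$ with $R^\beta(u,v)=I-\frac{1}{u+\beta/u-v-\beta/v}P$, $P$ the permutation operator on $\mathbb C^n\otimes\mathbb C^n$. The identity of series is understood by comparing coefficients of monomials $u^{a}v^{b}$. *)

(* Defs.v *)
From HB Require Import structures.
From mathcomp Require Import all_boot all_algebra.
From mathcomp Require Import complex.
From mathcomp Require Import Rstruct.
Set Implicit Arguments. Unset Strict Implicit. Unset Printing Implicit Defensive.
Import GRing.Theory.
Local Open Scope ring_scope.

Definition CC : fieldType := (Rdefinitions.R)[i].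

Section Defs.
Variables (A : algType CC) (n : nat).

(* Generators t^{(r)}_{ij}, r >= 1, are given by t : nat -> 'I_n -> 'I_n -> A
   (the value t 0 i j is ignored); tt r i j is t^{(r)}_{ij} with the
   convention t^{(0)}_{ij} = delta_{ij}. *)
Definition tt (t : nat -> 'I_n -> 'I_n -> A) (r : nat) (i j : 'I_n) : A :=
  if r is 0 then (i == j)%:R else t r i j.

Definition comm (x y : A) : A := x * y - y * x.

(* A formal series in one variable z, given by its coefficients:
   S a = coefficient of z^a (a : int). *)
(* T_{ij}(z) = sum_{r>=0} t^{(r)}_{ij} z^{-r}. *)
Definition Tser (t : nat -> 'I_n -> 'I_n -> A) (i j : 'I_n) : int -> A :=
  fun a => match a with
           | Posz 0 => tt t 0 i j
           | Posz _ => 0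
           | Negz m => tt t m.+1 i j   (* Negz m = -(m+1) *)
           end.

(* Double series in u, v: S a b = coefficient of u^a v^b. *)
(* X(u) Y(v) *)
Definition mulUV (X Y : int -> A) : int -> int -> A := fun a b => X a * Y b.
(* Y(v) X(u) *)
Definition mulVU (Y X : int -> A) : int -> int -> A := fun a b => Y b * X a.
(* u^p v^q S(u,v) *)
Definition shiftUV (p q : int) (S : int -> int -> A) : int -> int -> A :=
  fun a b => S (a - p) (b - q).

(* The series relation
   (u + beta/u - v - beta/v) [T_ij(u), T_kl(v)] = T_kj(u) T_il(v) - T_kj(v) T_il(u),
   as an identity of coefficients of all monomials u^a v^b. *)
Definition series_relation (beta : CC) (t : nat -> 'I_n -> 'I_n -> A)
    (i j k l : 'I_n) : Prop :=
  let C := fun a b => mulUV (Tser t i j) (Tser t k l) a b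
                      - mulVU (Tser t k l) (Tser t i j) a b in
  forall a b : int,
    shiftUV 1 0 C a b + beta *: shiftUV (-1) 0 C a b
    - shiftUV 0 1 C a b - beta *: shiftUV 0 (-1) C a b
    = mulUV (Tser t k j) (Tser t i l) a b - mulVU (Tser t k j) (Tser t i l) a b.

(* Necessarily p, m < r, so the sum is taken over p < r, m < r. *)
Definition coeff_relation (beta : CC) (t : nat -> 'I_n -> 'I_n -> A)
    (r s : nat) (i j k l : 'I_n) : Prop :=
  comm (t r i j) (t s k l) =
  \sum_(p < r) \sum_(m < r | ((m <= p + s)%N && (p + m + 1 <= r)%N))
     beta ^+ m *: (tt t (r - p - m - 1)%N k j * tt t (p + s - m)%N i l
                   - tt t (p + s - m)%N k j * tt t (r - p - m - 1)%N i l).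

End Defs.

(* Main.v *)
Require Import Defs.
From HB Require Import structures.
From mathcomp Require Import all_boot all_algebra zify.
From mathcomp Require Import complex Rstruct.
Import GRing.Theory Num.Theory.
Local Open Scope ring_scope.

Lemma eqsn (V : zmodType) (a b : nat) (f g : nat -> V) :
  (forall x, (a <= x)%N -> (x < b)%N -> f x = g x) ->
  \sum_(a <= x < b) f x = \sum_(a <= x < b) g x.
Proof.
move=> h; rewrite big_nat_cond [RHS]big_nat_cond.
by apply: eq_bigr => x /andP[/andP[h1 h2] _]; apply: h.
Qed.

Lemma sum_rev (V : zmodType) N (f : nat -> V) :
  \sum_(0 <= x < N.+1) f x = \sum_(0 <= x < N.+1) f (N - x)%N.
Proof.
rewrite big_nat_rev.
change (\sum_(0<=x<N.+1) f (0 + N.+1 - x.+1)%N = \sum_(0 <= x < N.+1) f (N - x)%N).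
apply: eqsn => x _ hx. by rewrite add0n subSS.
Qed.

Lemma window (V : zmodType) r lo hi (f : nat -> V) : (hi <= r)%N ->
  \sum_(p < r | (lo <= p)%N && (p < hi)%N) f p = \sum_(lo <= p < hi) f p.
Proof.
move=> h.
rewrite big_geq_mkord (big_ord_widen_cond r _ _ h).
reflexivity.
Qed.

Lemma shift_sum (V : zmodType) a b (f : nat -> V) :
  \sum_(a <= p < b) f p = \sum_(0 <= q < b - a) f (q + a)%N.
Proof. by rewrite -{1}(add0n a) big_addn. Qed.

Lemma two_neq0 : (2:CC) != 0.
Proof. by rewrite /CC pnatr_eq0. Qed.

Section Main.
Variables (n : nat) (A : algType CC) (beta : CC) (t : nat -> 'I_n -> 'I_n -> A).
Variables (i j k l : 'I_n).

Definition D (r s : nat) : A :=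
  tt t r k j * tt t s i l - tt t s k j * tt t r i l.

Lemma Danti r s : D s r = - D r s.
Proof. by rewrite /D opprB. Qed.

Lemma Ddiag r : D r r = 0.
Proof. by rewrite /D subrr. Qed.

Definition Sm (N K : nat) : A := \sum_(0 <= x < K) D x (N - x).

Definition F (r s : nat) : A :=
  \sum_(0 <= m < minn r s) beta ^+ m *: Sm (r + s - 1 - 2 * m) (r - m).

Lemma Sstep N K : Sm N K.+1 = Sm N K + D K (N - K).
Proof. by rewrite /Sm big_nat_recr. Qed.

Lemma half0 (X : A) : X = - X -> X = 0.
Proof.
move=> h.
have h2 : (2:CC) *: X = 0 by rewrite scaler_nat mulr2n {1}h addNr.
by rewrite -[X]scale1r -(mulVf two_neq0) -scalerA h2 scaler0.
Qed.

Lemma Sfull N : Sm N N.+1 = 0.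
Proof.
apply: half0; rewrite /Sm.
rewrite {1}sum_rev -sumrN.
apply: (@eqsn A) => x _ hx.
rewrite (_ : (N - (N - x) = x)%N); last by lia.
by rewrite Danti.
Qed.

Lemma Sfull' N : \sum_(0 <= q < N.+1) D (N - q) q = 0.
Proof.
transitivity (- Sm N N.+1); last by rewrite Sfull oppr0.
rewrite /Sm -sumrN.
apply: (@eqsn A) => x _ hx.
by rewrite Danti.
Qed.


Lemma SNN N : Sm N N = - D N 0.
Proof.
have h := Sfull N; rewrite Sstep subnn in h.
by apply/eqP; rewrite -addr_eq0 h.
Qed.

Lemma F0l s : F 0 s = 0.
Proof. by rewrite /F min0n big_geq. Qed.

Lemma F0r r : F r 0 = 0.
Proof. by rewrite /F minn0 big_geq. Qed.

Lemma Fsplit1 r s : F r.+1 s =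
  \sum_(0 <= m < minn r s) beta ^+ m *: Sm (r + s - 2 * m) (r - m).+1
  + (if (r < s)%N then beta ^+ r *: D 0 (s - r) else 0).
Proof.
rewrite /F; case: (ltnP r s) => h.
- have em : minn r.+1 s = r.+1 by lia. rewrite ?em {em}.
  have em : minn r s = r by lia. rewrite ?em {em}.
  rewrite big_nat_recr //=; congr (_ + _).
  + apply: (@eqsn A) => m _ hm.
    rewrite (_ : (r.+1 + s - 1 - 2 * m = r + s - 2 * m)%N); last by lia.
    by rewrite (_ : (r.+1 - m = (r - m).+1)%N); last by lia.
  + rewrite (_ : (r.+1 - r = 1)%N); last by lia.
    rewrite /Sm big_nat1 subn0.
    by rewrite (_ : (r.+1 + s - 1 - 2 * r = s - r)%N); last by lia.
- have em : minn r.+1 s = s by lia. rewrite ?em {em}.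
  have em : minn r s = s by lia. rewrite ?em {em}.
  rewrite addr0; apply: (@eqsn A) => m _ hm.
  rewrite (_ : (r.+1 + s - 1 - 2 * m = r + s - 2 * m)%N); last by lia.
  by rewrite (_ : (r.+1 - m = (r - m).+1)%N); last by lia.
Qed.

Lemma Fsplit2 r s : F r s.+1 =
  \sum_(0 <= m < minn r s) beta ^+ m *: Sm (r + s - 2 * m) (r - m)
  + (if (s < r)%N then - (beta ^+ s *: D (r - s) 0) else 0).
Proof.
rewrite /F; case: (ltnP s r) => h.
- have em : minn r s.+1 = s.+1 by lia. rewrite ?em {em}.
  have em : minn r s = s by lia. rewrite ?em {em}.
  rewrite big_nat_recr //=; congr (_ + _).
  + apply: (@eqsn A) => m _ hm.
    by rewrite (_ : (r + s.+1 - 1 - 2 * m = r + s - 2 * m)%N); last by lia.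
  + rewrite (_ : (r + s.+1 - 1 - 2 * s = r - s)%N); last by lia.
    by rewrite SNN scalerN.
- have em : minn r s.+1 = r by lia. rewrite ?em {em}.
  have em : minn r s = r by lia. rewrite ?em {em}.
  rewrite addr0; apply: (@eqsn A) => m _ hm.
  by rewrite (_ : (r + s.+1 - 1 - 2 * m = r + s - 2 * m)%N); last by lia.
Qed.

Lemma Adiff r s : F r.+1 s - F r s.+1 =
  \sum_(0 <= m < (minn r s).+1) beta ^+ m *: D (r - m) (s - m).
Proof.
rewrite Fsplit1 Fsplit2 big_nat_recr //=.
rewrite opprD addrACA; congr (_ + _).
  rewrite -sumrB; apply: (@eqsn A) => m _ hm.
  rewrite -scalerBr Sstep (addrC (Sm _ _)) addrK.
  by rewrite (_ : (r + s - 2 * m - (r - m) = s - m)%N); last by lia.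
case: (ltngtP r s) => h.
- by rewrite subr0 subnn.
- by rewrite sub0r opprK subnn.
- by rewrite ?h ?minnn subnn Ddiag scaler0 subr0.
Qed.

Lemma FE r s : F r.+1 s + beta *: F r.-1 s - F r s.+1 - beta *: F r s.-1 = D r s.
Proof.
rewrite (_ : forall a b c d : A, a + b - c - d = (a - c) + (b - d)); last by move=> a b c d; rewrite -addrA addrACA.
rewrite -scalerBr Adiff.
case: r => [|r]; case: s => [|s].
- by rewrite !F0l subrr scaler0 addr0 min0n big_nat1 expr0 scale1r !subn0.
- by rewrite !F0l subrr scaler0 addr0 min0n big_nat1 expr0 scale1r !subn0.
- by rewrite !F0r subrr scaler0 addr0 minn0 big_nat1 expr0 scale1r !subn0.
rewrite /=.
have h2 : F r s.+1 - F r.+1 s = - (F r.+1 s - F r s.+1) by rewrite opprB.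
rewrite h2 Adiff minnSS big_nat_recl // expr0 scale1r !subn0 -addrA.
rewrite scalerN scaler_sumr.
rewrite (_ : \sum_(0 <= i < (minn r s).+1) beta ^+ i.+1 *: D (r.+1 - i.+1) (s.+1 - i.+1)
  = \sum_(0 <= i < (minn r s).+1) beta *: (beta ^+ i *: D (r - i) (s - i))).
  by rewrite subrr addr0.
apply: (@eqsn A) => m _ _.
by rewrite !subSS exprS scalerA.
Qed.


Lemma Inner r s m : (m < r)%N ->
  \sum_(p < r | (m <= p + s)%N && (p + m + 1 <= r)%N) D (r - p - m - 1) (p + s - m)
  = if (m < s)%N then Sm (r + s - 1 - 2 * m) (r - m) else 0.
Proof.
move=> hm.
rewrite (eq_bigl (fun p : 'I_r => (m - s <= p)%N && (p < r - m)%N)); last first.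
  by move=> p /=; apply/andP/andP; case=> h1 h2; split; lia.
rewrite (@window A _ _ _ (fun p => D (r - p - m - 1) (p + s - m))); last by lia.
case: ltnP => hms.
- rewrite (_ : (m - s = 0)%N); last by lia.
  have hK : (r - m = (r - m - 1).+1)%N by lia.
  rewrite /Sm hK sum_rev; apply: (@eqsn A) => x _ hx.
  congr D; lia.
- case: (leqP (r - m) (m - s)) => h1.
    by rewrite big_geq.
  rewrite shift_sum.
  have hK : (r - m - (m - s) = (r - m - (m - s) - 1).+1)%N by lia.
  rewrite hK; set K := (r - m - (m - s) - 1)%N.
  transitivity (\sum_(0 <= q < K.+1) D (K - q) q); last exact: Sfull'.
  apply: (@eqsn A) => x _ hx.
  congr D; lia.
Qed.

Lemma Feq r s :
  \sum_(p < r) \sum_(m < r | (m <= p + s)%N && (p + m + 1 <= r)%N)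
     beta ^+ m *: D (r - p - m - 1) (p + s - m) = F r s.
Proof.
rewrite (exchange_big_dep xpredT) //=.
rewrite (eq_bigr (fun m : 'I_r => beta ^+ m *: (if (m < s)%N then Sm (r + s - 1 - 2 * m) (r - m) else 0))); last first.
  by move=> m _; rewrite -scaler_sumr -Inner.
rewrite -(big_mkord xpredT (fun m => beta ^+ m *: (if (m < s)%N then Sm (r + s - 1 - 2 * m) (r - m) else 0))).
rewrite (@big_cat_nat _ _ _ (minn r s)) //=; last by apply: geq_minl.
rewrite [X in _ + X]big_nat_cond [X in _ + X]big1 ?addr0; last first.
  move=> m /andP[/andP[h1 h2] _].
  have -> : (m < s)%N = false by lia.
  by rewrite scaler0.
apply: (@eqsn A) => m _ hm.
have -> : (m < s)%N = true by lia.
by [].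
Qed.
Definition cN (r s : nat) : A := comm (tt t r i j) (tt t s k l).

Lemma comm_natl (m : nat) (y : A) : comm (m%:R) y = 0.
Proof. by rewrite /comm (commr_nat y) subrr. Qed.

Lemma comm_natr (m : nat) (y : A) : comm y (m%:R) = 0.
Proof. by rewrite /comm (commr_nat y) subrr. Qed.

Lemma cN0l s : cN 0 s = 0.
Proof. exact: comm_natl. Qed.

Lemma cN0r r : cN r 0 = 0.
Proof. exact: comm_natr. Qed.

Definition EqC (r s : nat) :=
  cN r.+1 s + beta *: cN r.-1 s - cN r s.+1 - beta *: cN r s.-1 = D r s.

Lemma solve4 (X a b c d : A) : X + a - b - c = d -> X = d + c + b - a.
Proof. by move=> <-; rewrite subrK subrK addrK. Qed.

Lemma uniq_cF : (forall r s, EqC r s) -> forall r s, cN r s = F r s.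
Proof.
move=> hE.
have stc r s := @solve4 _ _ _ _ _ (hE r s).
have stf r s := @solve4 _ _ _ _ _ (FE r s).
suff H : forall r, (forall s, cN r s = F r s) /\ (forall s, cN r.+1 s = F r.+1 s).
  by move=> r s; case: (H r) => ->.
elim=> [|r [h0 h1]].
  split=> s; first by rewrite cN0l F0l.
  by rewrite stc stf /= !cN0l !F0l.
split=> // s.
by rewrite stc stf /= h0 !h1.
Qed.

Definition Cint (a b : int) : A := comm (Tser t i j a) (Tser t k l b).

Lemma series_unfold : series_relation beta t i j k l <->
  forall a b : int, Cint (a - 1) (b - 0) + beta *: Cint (a - -1) (b - 0)
    - Cint (a - 0) (b - 1) - beta *: Cint (a - 0) (b - -1)
    = Tser t k j a * Tser t i l b - Tser t k j b * Tser t i l a.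
Proof. by split=> h a b; apply: h. Qed.

Lemma TserN (x y : 'I_n) (r : nat) : Tser t x y (- (r:int)) = tt t r x y.
Proof. by case: r. Qed.

Lemma TserP (x y : 'I_n) (r : nat) : Tser t x y (Posz r.+1) = 0.
Proof. by []. Qed.

Lemma CintPl (r : nat) b : Cint (Posz r) b = 0.
Proof.
case: r => [|r]; first exact: comm_natl.
by rewrite /Cint /comm TserP mul0r mulr0 subrr.
Qed.

Lemma CintPr (s : nat) a : Cint a (Posz s) = 0.
Proof.
case: s => [|s]; first exact: comm_natr.
by rewrite /Cint /comm TserP mul0r mulr0 subrr.
Qed.

Lemma CintN (r s : nat) : Cint (- (r:int)) (- (s:int)) = cN r s.
Proof. by rewrite /Cint !TserN. Qed.

Lemma int_cases (a : int) : (exists r : nat, a = - (r:int)) \/ (exists r : nat, a = Posz r.+1).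
Proof.
case: a => [[|r]|r]; first by left; exists 0%N.
  by right; exists r.
by left; exists r.+1.
Qed.

Lemma series_iff : series_relation beta t i j k l <-> forall r s, EqC r s.
Proof.
rewrite series_unfold.
have e1 (r : nat) : - (r:int) - 1 = - (r.+1 : int) by lia.
have e2 (r s : nat) : Cint (- (r:int) - -1) (- (s:int)) = cN r.-1 s.
  case: r => [|r]; last by rewrite -CintN; congr Cint; lia.
  rewrite (_ : - (0%N:int) - -1 = Posz 1); last by lia.
  by rewrite CintPl cN0l.
have e3 (r s : nat) : Cint (- (r:int)) (- (s:int) - -1) = cN r s.-1.
  case: s => [|s]; last by rewrite -CintN; congr Cint; lia.
  rewrite (_ : - (0%N:int) - -1 = Posz 1); last by lia.
  by rewrite CintPr cN0r.
have key (r s : nat) : Cint (- (r:int) - 1) (- (s:int) - 0) + beta *: Cint (- (r:int) - -1) (- (s:int) - 0)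
    - Cint (- (r:int) - 0) (- (s:int) - 1) - beta *: Cint (- (r:int) - 0) (- (s:int) - -1)
    = cN r.+1 s + beta *: cN r.-1 s - cN r s.+1 - beta *: cN r s.-1.
  by rewrite !subr0 !e1 e2 e3 !CintN.
split.
  move=> h r s; have := h (- (r:int)) (- (s:int)).
  by rewrite key !TserN.
move=> h a b.
case: (int_cases a) => [[r ->]|[r ->]].
  case: (int_cases b) => [[s ->]|[s ->]].
    by rewrite key !TserN; apply: h.
  rewrite !TserP mulr0 mul0r subrr.
  rewrite (_ : Posz s.+1 - 0 = Posz s.+1); last by lia.
  rewrite (_ : Posz s.+1 - 1 = Posz s); last by lia.
  rewrite (_ : Posz s.+1 - -1 = Posz s.+2); last by lia.
  by rewrite !CintPr scaler0 !subr0 addr0.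
rewrite !TserP mul0r mulr0 subrr.
rewrite (_ : Posz r.+1 - 0 = Posz r.+1); last by lia.
rewrite (_ : Posz r.+1 - 1 = Posz r); last by lia.
rewrite (_ : Posz r.+1 - -1 = Posz r.+2); last by lia.
by rewrite !CintPl scaler0 !subr0 addr0.
Qed.

End Main.

Theorem mainTheorem6 (n : nat) (hn : (1 <= n)%N) (beta : CC) (hbeta : beta != 0)
    (A : algType CC) (t : nat -> 'I_n -> 'I_n -> A) :
  (forall i j k l : 'I_n, series_relation beta t i j k l) <->
  (forall (r s : nat), (1 <= r)%N -> (1 <= s)%N ->
     forall i j k l : 'I_n, coeff_relation beta t r s i j k l).
Proof.
split.
  move=> H r s hr hs i j k l.
  have hE := (@series_iff n A beta t i j k l).1 (H i j k l).
  have hu := @uniq_cF n A beta t i j k l hE r s.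
  rewrite /coeff_relation.
  case: r hr hu => [//|r] _; case: s hs => [//|s] _ hu.
  rewrite [RHS](@Feq n A beta t i j k l).
  exact: hu.
move=> H i j k l.
apply/(@series_iff n A beta t i j k l) => r s.
have hcf : forall r s, @cN n A t i j k l r s = @F n A beta t i j k l r s.
  move=> [|r'] [|s'].
  - by rewrite cN0l F0l.
  - by rewrite cN0l F0l.
  - by rewrite cN0r F0r.
  rewrite -Feq; exact: H.
by rewrite /EqC !hcf FE.
Qed.
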